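(* Let $G$ be a finitely generated torsion-free nilpotent group, and suppose $\overline{G}=R_1\times\cdots\times R_m=K_1\times\cdots\times K_m$ are two decompositions of $\overline{G}$ into nontrivial, rationally indecomposable rational subgroups, indexed so that for every $i$: the restriction to $K_i$ of the projection $\alpha_i:\overline{G}\to R_i$ is an isomorphism onto $R_i$ whose inverse is the restriction to $R_i$ of the projection $\beta_i:\overline{G}\to K_i$, and $\overline{G}=R_1\times\cdots\times R_{i-1}\times K_i\times R_{i+1}\times\cdots\times R_m$. Then $K_iZ(\overline{G})=R_iZ(\overline{G})$ for all $i$.
   Context: $\overline{G}$ is the rational closure (Malcev completion) of $G$: a torsion-free nilpotent group containing $G$ in which every element has a unique $n$-th root for each $n\ge1$ and some positive power of every element lies in $G$. A subgroup is rational if closed under taking $n$-th roots for all $n\ge1$; rationally indecomposable means not a direct product of two nontrivial rational subgroups. $Z(\cdot)$ denotes the center. *)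

(* Defs.v *)
From Stdlib Require Import Arith List.
Set Implicit Arguments.

Record group := Group {
  carrier :> Type;
  gmul : carrier -> carrier -> carrier;
  gone : carrier;
  ginv : carrier -> carrier;
  gmulA : forall x y z, gmul x (gmul y z) = gmul (gmul x y) z;
  gmul1l : forall x, gmul gone x = x;
  gmulVl : forall x, gmul (ginv x) x = gone
}.

Section Defs.
Variable Gb : group.
Notation T := (carrier Gb).
Notation "x * y" := (gmul Gb x y).
Notation "1" := (gone Gb).

Fixpoint gpow (x : T) (n : nat) : T :=
  match n with 0 => 1 | S n => gpow x n * x end.

Definition comm (x y : T) : T := ginv Gb x * ginv Gb y * x * y.

Inductive gen (S : T -> Prop) : T -> Prop :=
| gen_in : forall x, S x -> gen S x
| gen_one : gen S 1
| gen_mul : forall x y, gen S x -> gen S y -> gen S (x * y)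
| gen_inv : forall x, gen S x -> gen S (ginv Gb x).

Definition subgroup (H : T -> Prop) : Prop :=
  H 1 /\ (forall x y, H x -> H y -> H (x * y)) /\ (forall x, H x -> H (ginv Gb x)).

Definition normal_in (H N : T -> Prop) : Prop :=
  forall h x, H h -> N x -> N (h * x * ginv Gb h).

Definition nontrivial (H : T -> Prop) : Prop := exists x, H x /\ x <> 1.

Fixpoint lcs (n : nat) : T -> Prop :=
  match n with
  | 0 => fun _ => True
  | S n => gen (fun c => exists x y, lcs n x /\ c = comm x y)
  end.

Definition nilpotent : Prop := exists n, forall x, lcs n x -> x = 1.

Definition torsion_free : Prop := forall x n, 1 <= n -> gpow x n = 1 -> x = 1.

Definition fin_generated (H : T -> Prop) : Prop :=
  exists l : list T, forall x, H x <-> gen (fun y => In y l) x.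

(* the whole group Gb is the rational closure (Malcev completion) of the subgroup G *)
Definition rational_closure_of (G : T -> Prop) : Prop :=
  subgroup G /\ torsion_free /\ nilpotent /\
  (forall x n, 1 <= n -> exists y, gpow y n = x /\ forall y', gpow y' n = x -> y' = y) /\
  (forall x, exists n, 1 <= n /\ G (gpow x n)).

Definition rational_subgroup (H : T -> Prop) : Prop :=
  subgroup H /\ forall x n, 1 <= n -> H (gpow x n) -> H x.

Fixpoint prodf (m : nat) (f : nat -> T) : T :=
  match m with 0 => 1 | S m => prodf m f * f m end.

Definition is_dprod (H : T -> Prop) (m : nat) (R : nat -> T -> Prop) : Prop :=
  (forall i, i < m -> subgroup (R i) /\ (forall x, R i x -> H x) /\ normal_in H (R i)) /\
  (forall h, H h -> exists f, (forall i, i < m -> R i (f i)) /\ h = prodf m f) /\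
  (forall f f', (forall i, i < m -> R i (f i)) -> (forall i, i < m -> R i (f' i)) ->
     prodf m f = prodf m f' -> forall i, i < m -> f i = f' i).

Definition rationally_indecomposable (H : T -> Prop) : Prop :=
  ~ exists A B, rational_subgroup A /\ rational_subgroup B /\ nontrivial A /\ nontrivial B /\
      is_dprod H 2 (fun j => if Nat.eqb j 0 then A else B).

Definition proj (m : nat) (R : nat -> T -> Prop) (i : nat) (g x : T) : Prop :=
  exists f, (forall j, j < m -> R j (f j)) /\ g = prodf m f /\ x = f i.

Definition center (x : T) : Prop := forall y, x * y = y * x.

Definition mul_set (A B : T -> Prop) (x : T) : Prop :=
  exists a b, A a /\ B b /\ x = a * b.

End Defs.

(* Main.v *)
Require Import Defs.
From Stdlib Require Import Arith List Lia.

Set Implicit Arguments.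
Section G.
Variable Gb : group.
Local Notation T := (carrier Gb).
Local Infix "*" := (gmul Gb).
Local Notation one := (gone Gb).
Local Notation inv := (ginv Gb).
Local Notation prodf := (@prodf Gb).
Local Notation is_dprod := (@is_dprod Gb).
Local Notation center := (@center Gb).

Lemma gmulV (x : T) : x * inv x = one.
Proof.
  rewrite <- (gmul1l Gb (x * inv x)).
  rewrite <- (gmulVl Gb (inv x)) at 1.
  rewrite <- gmulA. rewrite (gmulA Gb (inv x)). rewrite gmulVl, gmul1l.
  apply gmulVl.
Qed.

Lemma gmul1r (x : T) : x * one = x.
Proof. rewrite <- (gmulVl Gb x), gmulA, gmulV. apply gmul1l. Qed.

Lemma gmulKl (x y : T) : inv x * (x * y) = y.
Proof. rewrite gmulA, gmulVl. apply gmul1l. Qed.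

Lemma gmulKr (x y : T) : x * (inv x * y) = y.
Proof. rewrite gmulA, gmulV. apply gmul1l. Qed.

Lemma gcancel (a x y : T) : a * x = a * y -> x = y.
Proof. intro H. rewrite <- (gmulKl a x), <- (gmulKl a y), H. reflexivity. Qed.

Lemma ginvK (x : T) : inv (inv x) = x.
Proof. apply (gcancel (inv x)). rewrite gmulV, gmulVl. reflexivity. Qed.

Definition commute (a b : T) := a * b = b * a.

Lemma commute_sym a b : commute a b -> commute b a.
Proof. unfold commute; auto. Qed.

Lemma commute_one a : commute one a.
Proof. unfold commute. rewrite gmul1l, gmul1r. reflexivity. Qed.

Lemma commute_refl a : commute a a.
Proof. reflexivity. Qed.

Lemma commute_mul a b c : commute a c -> commute b c -> commute (a * b) c.
Proof.
  unfold commute; intros H1 H2.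
  rewrite <- gmulA, H2, gmulA, H1, gmulA. reflexivity.
Qed.

Lemma commute_inv a b : commute a b -> commute (inv a) b.
Proof.
  unfold commute; intro H.
  apply (gcancel a). rewrite gmulKr, gmulA, H, <- gmulA, gmulV, gmul1r. reflexivity.
Qed.

Lemma commute_prod m f y : (forall j, j < m -> commute (f j) y) -> commute (prodf m f) y.
Proof.
  induction m; simpl; intros H.
  - apply commute_one.
  - apply commute_mul; auto.
Qed.

Lemma prodf_ext m f g : (forall j, j < m -> f j = g j) -> prodf m f = prodf m g.
Proof.
  induction m; simpl; intros H; auto.
  rewrite IHm by auto. rewrite H by auto. reflexivity.
Qed.

Lemma prodf_delta m i x : prodf m (fun j => if j =? i then x else one) = if i <? m then x else one.
Proof.
  induction m; simpl.
  - reflexivity.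
  - rewrite IHm. destruct (Nat.eq_dec i m) as [->|Hn].
    + rewrite Nat.ltb_irrefl, Nat.eqb_refl, gmul1l.
      replace (m <? S m) with true; auto. symmetry; apply Nat.ltb_lt; auto.
    + replace (m =? i) with false by (symmetry; apply Nat.eqb_neq; auto).
      rewrite gmul1r.
      destruct (i <? m) eqn:E.
      * apply Nat.ltb_lt in E. replace (i <? S m) with true; auto.
        symmetry; apply Nat.ltb_lt; auto.
      * apply Nat.ltb_ge in E. replace (i <? S m) with false; auto.
        symmetry; apply Nat.ltb_ge. destruct (Nat.eq_dec i m); [contradiction|]. 
        apply Nat.le_succ_l. apply Nat.le_neq; auto.
Qed.

Definition TT : T -> Prop := fun _ => True.

Lemma dprod_inter m F i j x : is_dprod TT m F -> i < m -> j < m -> i <> j ->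
  F i x -> F j x -> x = one.
Proof.
  intros [Hs [_ Hu]] Hi Hj Hij Hx1 Hx2.
  assert (Hd : forall k, k < m -> F k x -> forall l, l < m ->
            F l ((fun l => if l =? k then x else one) l)).
  { intros k Hk Hxk l Hl. destruct (l =? k) eqn:E.
    - apply Nat.eqb_eq in E; subst; auto.
    - destruct (Hs l Hl) as [[H1 _] _]. exact H1. }
  pose proof (Hu _ _ (Hd i Hi Hx1) (Hd j Hj Hx2)) as HH.
  rewrite !prodf_delta in HH.
  replace (i <? m) with true in HH by (symmetry; apply Nat.ltb_lt; auto).
  replace (j <? m) with true in HH by (symmetry; apply Nat.ltb_lt; auto).
  specialize (HH eq_refl i Hi). simpl in HH.
  rewrite Nat.eqb_refl in HH.
  replace (i =? j) with false in HH by (symmetry; apply Nat.eqb_neq; auto).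
  exact HH.
Qed.

Lemma dprod_comm m F i j a b : is_dprod TT m F -> i < m -> j < m -> i <> j ->
  F i a -> F j b -> commute a b.
Proof.
  intros HD Hi Hj Hij Ha Hb.
  pose proof HD as [Hs _].
  destruct (Hs i Hi) as [[_ [Mi Ii]] [_ Ni]].
  destruct (Hs j Hj) as [[_ [Mj Ij]] [_ Nj]].
  set (c := inv a * inv b * a * b).
  assert (C1 : F i c).
  { assert (E : c = inv a * (inv b * a * inv (inv b))).
    { unfold c. rewrite ginvK, !gmulA. reflexivity. }
    rewrite E. apply Mi; auto. apply Ni; [exact I|auto]. }
  assert (C2 : F j c).
  { unfold c. apply Mj; auto.
    pose proof (Nj (inv a) (inv b) I (Ij _ Hb)) as H. rewrite ginvK in H. exact H. }
  pose proof (@dprod_inter m F i j c HD Hi Hj Hij C1 C2) as Hc.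
  unfold commute.
  assert (E : b * a * c = a * b).
  { unfold c. rewrite !gmulA.
    rewrite <- (gmulA Gb b a (inv a)), gmulV, gmul1r, gmulV, gmul1l. reflexivity. }
  rewrite <- E, Hc, gmul1r. reflexivity.
Qed.

Lemma prodf_split m f i : i < m -> (forall j, j < m -> commute (f i) (f j)) ->
  prodf m f = f i * prodf m (fun j => if j =? i then one else f j).
Proof.
  revert i. induction m; intros i Hi H; [inversion Hi|].
  simpl. destruct (Nat.eq_dec i m) as [->|Hn].
  - rewrite Nat.eqb_refl, gmul1r.
    rewrite (@prodf_ext m (fun j => if j =? m then one else f j) f).
    + apply commute_prod. intros j Hj. apply commute_sym, H; lia.
    + intros j Hj. replace (j =? m) with false; auto. symmetry; apply Nat.eqb_neq; lia.
  - replace (m =? i) with false by (symmetry; apply Nat.eqb_neq; auto).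
    rewrite (IHm i); [rewrite gmulA; reflexivity|lia|]. intros j Hj; apply H; lia.
Qed.

Lemma dprod_central m F s : is_dprod TT m F ->
  (forall j y, j < m -> F j y -> commute s y) -> center s.
Proof.
  intros [_ [Hd _]] H y. destruct (Hd y I) as [h [Hh ->]].
  apply commute_sym. apply commute_prod. intros j Hj. apply commute_sym. eauto.
Qed.

Lemma center_mul a b : center a -> center b -> center (a * b).
Proof.
  intros Ha Hb y. unfold center in *.
  rewrite <- gmulA, Hb, gmulA, Ha, gmulA. reflexivity.
Qed.

End G.
Arguments commute {Gb} a b.

Theorem mainTheorem9 (Gb : group) (G : Gb -> Prop) (m : nat)
    (R K : nat -> Gb -> Prop) :
  @fin_generated Gb G ->
  @rational_closure_of Gb G ->
  @is_dprod Gb (fun _ => True) m R ->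
  @is_dprod Gb (fun _ => True) m K ->
  (forall i, i < m ->
     @rational_subgroup Gb (R i) /\ @nontrivial Gb (R i) /\ @rationally_indecomposable Gb (R i) /\
     @rational_subgroup Gb (K i) /\ @nontrivial Gb (K i) /\ @rationally_indecomposable Gb (K i)) ->
  (forall i, i < m ->
     (* alpha_i restricted to K_i is an isomorphism onto R_i, with inverse beta_i restricted to R_i *)
     (forall k r, K i k -> @proj Gb m R i k r -> @proj Gb m K i r k) /\
     (forall r k, R i r -> @proj Gb m K i r k -> @proj Gb m R i k r) /\
     @is_dprod Gb (fun _ => True) m (fun j => if Nat.eqb j i then K i else R j)) ->
  forall i, i < m ->
    forall x, @mul_set Gb (K i) (@center Gb) x <-> @mul_set Gb (R i) (@center Gb) x.
Proof.
  intros _ _ HR HK _ Hcond i Hi x.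
  destruct (Hcond i Hi) as [_ [_ HD3]].
  change (@is_dprod Gb (@TT Gb) m R) in HR.
  change (@is_dprod Gb (@TT Gb) m K) in HK.
  change (@is_dprod Gb (@TT Gb) m (fun j => if j =? i then K i else R j)) in HD3.
  assert (F1 : forall j y z, j < m -> j <> i -> K i y -> R j z -> commute y z).
  { intros j y z Hj Hji Hy Hz.
    apply (dprod_comm (i := i) (j := j) y z HD3); auto.
    - cbv beta. rewrite Nat.eqb_refl; auto.
    - cbv beta. replace (j =? i) with false by (symmetry; apply Nat.eqb_neq; auto); auto. }
  assert (F2 : forall j y z, j < m -> j <> i -> R i y -> R j z -> commute y z).
  { intros j y z Hj Hji Hy Hz. apply (dprod_comm (i := i) (j := j) y z HR); auto. }
  assert (F2' : forall j y z, j < m -> j <> i -> K i y -> K j z -> commute y z).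
  { intros j y z Hj Hji Hy Hz. apply (dprod_comm (i := i) (j := j) y z HK); auto. }
  split.
  - intros [k [z [Hk [Hz ->]]]].
    pose proof HR as [_ [Hdec _]].
    destruct (Hdec k I) as [f [Hf Ek]].
    assert (Hsplit : k = gmul Gb (f i) (@prodf Gb m (fun j => if j =? i then gone Gb else f j))).
    { rewrite Ek. apply prodf_split; auto. intros j Hj.
      destruct (Nat.eq_dec j i) as [->|Hn]; [apply commute_refl|]. apply (F2 j); auto. }
    set (s := @prodf Gb m (fun j => if j =? i then gone Gb else f j)) in *.
    assert (Cs : @center Gb s).
    { apply (dprod_central HR). intros j y Hj Hy.
      destruct (Nat.eq_dec j i) as [->|Hn].
      + apply commute_prod. intros j' Hj'. destruct (j' =? i) eqn:E.
        * apply commute_one.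
        * apply Nat.eqb_neq in E. apply commute_sym. apply (F2 j'); auto.
      + assert (Es : s = gmul Gb (ginv Gb (f i)) k) by (rewrite Hsplit, gmulKl; reflexivity).
        rewrite Es. apply commute_mul.
        * apply commute_inv. apply (F2 j); auto.
        * apply (F1 j); auto. }
    exists (f i), (gmul Gb s z). repeat split; auto.
    + apply center_mul; auto.
    + rewrite Hsplit, gmulA. reflexivity.
  - intros [r [z [Hr [Hz ->]]]].
    pose proof HK as [_ [Hdec _]].
    destruct (Hdec r I) as [f [Hf Er]].
    assert (Hsplit : r = gmul Gb (f i) (@prodf Gb m (fun j => if j =? i then gone Gb else f j))).
    { rewrite Er. apply prodf_split; auto. intros j Hj.
      destruct (Nat.eq_dec j i) as [->|Hn]; [apply commute_refl|]. apply (F2' j); auto. }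
    set (t := @prodf Gb m (fun j => if j =? i then gone Gb else f j)) in *.
    assert (Ct : @center Gb t).
    { apply (dprod_central HD3). intros j y Hj Hy.
      destruct (Nat.eq_dec j i) as [->|Hn].
      + rewrite Nat.eqb_refl in Hy.
        apply commute_prod. intros j' Hj'. destruct (j' =? i) eqn:E.
        * apply commute_one.
        * apply Nat.eqb_neq in E. apply commute_sym. apply (F2' j'); auto.
      + replace (j =? i) with false in Hy by (symmetry; apply Nat.eqb_neq; auto).
        assert (Et : t = gmul Gb (ginv Gb (f i)) r) by (rewrite Hsplit, gmulKl; reflexivity).
        rewrite Et. apply commute_mul.
        * apply commute_inv. apply (F1 j); auto.
        * apply (F2 j); auto. }
    exists (f i), (gmul Gb t z). repeat split; auto.
    + apply center_mul; auto.
    + rewrite Hsplit, gmulA. reflexivity.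
Qed.
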